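(* Let $\mathcal C$ be a hyper-extensive category and $H\colon\mathcal C\to\mathcal C$ a functor preserving countable coproducts and having a terminal coalgebra $t\colon \nu H\to H(\nu H)$. For every object $Y$, put $H^*Y=\coprod_{n<\omega}H^nY$ with coproduct injections $j_n\colon H^nY\to H^*Y$, and let $\phi_Y\colon HH^*Y\cong\coprod_{n<\omega}H^{n+1}Y\to H^*Y$ be the morphism with $\phi_Y\cdot Hj_n=j_{n+1}$ for all $n$. Then the free cia on $Y$ is $$CY=H^*Y+\nu H$$ with algebra structure $H(H^*Y+\nu H)\cong HH^*Y+H(\nu H)\xrightarrow{\phi_Y+t^{-1}}H^*Y+\nu H$ and universal morphism $\mathrm{inl}\cdot j_0\colon Y\to H^*Y+\nu H$. More precisely, $H^*Y+\nu H$ with the coalgebra structure $H^*Y+\nu H\xrightarrow{\sigma_Y+t}Y+HH^*Y+H(\nu H)\cong Y+H(H^*Y+\nu H)$, where $\sigma_Y$ is the inverse of the isomorphism $[j_0,\phi_Y]\colon Y+HH^*Y\to H^*Y$, is a terminal coalgebra for the functor $Y+H(-)$.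
   Context: A category is hyper-extensive if it has countable coproducts which are (1) universal: pullbacks along arbitrary morphisms exist and preserve countable coproducts; (2) disjoint: coproduct injections are monomorphisms and any two distinct injections have pullback the initial object $0$; (3) coherent: if $a_n\colon A_n\to A$ ($n\in\mathbb N$) are pairwise disjoint morphisms each of which is a coproduct injection, then $[a_n]_{n}\colon\coprod_n A_n\to A$ is a coproduct injection. By Lambek's lemma the terminal coalgebra structure $t$ is invertible, so $(\nu H,t^{-1})$ is an $H$-algebra. An $H$-algebra $a\colon HA\to A$ is a cia (completely iterative algebra) if for every morphism $e\colon X\to HX+A$ there is a unique $s\colon X\to A$ with $s=[a,\mathrm{id}_A]\cdot(Hs+\mathrm{id}_A)\cdot e$. A free cia on $Y$ is a cia $(C,c)$ with a morphism $\eta\colon Y\to C$ such that for every cia $(B,b)$ and morphism $f\colon Y\to B$ there is a unique $H$-algebra morphism $h\colon C\to B$ with $h\cdot\eta=f$. *)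

(* Defs.v *)
Set Implicit Arguments.
Unset Strict Implicit.

Record Category := {
  Obj :> Type;
  Hom : Obj -> Obj -> Type;
  idm : forall A, Hom A A;
  comp : forall A B C, Hom B C -> Hom A B -> Hom A C;
  comp_id_l : forall A B (f : Hom A B), comp (idm B) f = f;
  comp_id_r : forall A B (f : Hom A B), comp f (idm A) = f;
  comp_assoc : forall A B C D (h : Hom C D) (g : Hom B C) (f : Hom A B),
      comp h (comp g f) = comp (comp h g) f
}.
Arguments Hom {c} _ _.
Arguments idm {c} _.
Arguments comp {c A B C} _ _.

Notation "g ∘ f" := (comp g f) (at level 40, left associativity).

Record Functor (C : Category) := {
  Fobj :> C -> C;
  Fmap : forall (A B : C), Hom A B -> Hom (Fobj A) (Fobj B);
  Fmap_id : forall A : C, Fmap (idm A) = idm (Fobj A);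
  Fmap_comp : forall (A B D : C) (g : Hom B D) (f : Hom A B),
      Fmap (g ∘ f) = Fmap g ∘ Fmap f
}.
Arguments Fmap {C} f0 {A B} _.

Section Cat.
Variable C : Category.

Definition is_iso (A B : C) (f : Hom A B) : Prop :=
  exists g : Hom B A, g ∘ f = idm A /\ f ∘ g = idm B.

Definition is_mono (A B : C) (f : Hom A B) : Prop :=
  forall (X : C) (g h : Hom X A), f ∘ g = f ∘ h -> g = h.

Definition is_initial (I : C) : Prop :=
  forall X : C, exists f : Hom I X, forall g : Hom I X, g = f.

Definition countable (I : Type) : Prop :=
  exists f : I -> nat, forall x y, f x = f y -> x = y.

Definition is_coproduct (I : Type) (A : I -> C) (S : C)
  (inj : forall i, Hom (A i) S) : Prop :=
  forall (X : C) (f : forall i, Hom (A i) X),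
    exists h : Hom S X, (forall i, h ∘ inj i = f i) /\
      (forall h' : Hom S X, (forall i, h' ∘ inj i = f i) -> h' = h).
Arguments is_coproduct [I] A [S] inj.

Definition is_coproduct2 (A B S : C) (l : Hom A S) (r : Hom B S) : Prop :=
  forall (X : C) (f : Hom A X) (g : Hom B X),
    exists h : Hom S X, h ∘ l = f /\ h ∘ r = g /\
      (forall h' : Hom S X, h' ∘ l = f -> h' ∘ r = g -> h' = h).

Definition is_pullback (A B Z : C) (f : Hom A Z) (g : Hom B Z)
  (P : C) (p : Hom P A) (q : Hom P B) : Prop :=
  f ∘ p = g ∘ q /\
  forall (X : C) (x : Hom X A) (y : Hom X B), f ∘ x = g ∘ y ->
    exists u : Hom X P, p ∘ u = x /\ q ∘ u = y /\
      (forall u' : Hom X P, p ∘ u' = x -> q ∘ u' = y -> u' = u).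

Definition is_coproduct_injection (X A : C) (a : Hom X A) : Prop :=
  exists (X' : C) (b : Hom X' A), is_coproduct2 a b.

Definition disjoint_morphisms (X X' A : C) (a : Hom X A) (b : Hom X' A) : Prop :=
  exists (P : C) (p : Hom P X) (q : Hom P X'), is_initial P /\ is_pullback a b p q.

Definition has_countable_coproducts : Prop :=
  forall (I : Type), countable I -> forall A : I -> C,
    exists (S : C) (inj : forall i, Hom (A i) S), is_coproduct A inj.

Definition coproducts_universal : Prop :=
  forall (I : Type), countable I -> forall (A : I -> C) (S : C)
    (inj : forall i, Hom (A i) S), is_coproduct A inj ->
    forall (B : C) (f : Hom B S),
      (forall i, exists (P : C) (q : Hom P (A i)) (p : Hom P B),
          is_pullback (inj i) f q p) /\
      (forall (P : I -> C) (p : forall i, Hom (P i) B)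
              (q : forall i, Hom (P i) (A i)),
          (forall i, is_pullback (inj i) f (q i) (p i)) -> is_coproduct P p).

Definition coproducts_disjoint : Prop :=
  forall (I : Type), countable I -> forall (A : I -> C) (S : C)
    (inj : forall i, Hom (A i) S), is_coproduct A inj ->
    (forall i, is_mono (inj i)) /\
    (forall i j, i <> j -> disjoint_morphisms (inj i) (inj j)).

Definition coproducts_coherent : Prop :=
  forall (A : C) (An : nat -> C) (a : forall n, Hom (An n) A),
    (forall n, is_coproduct_injection (a n)) ->
    (forall n m, n <> m -> disjoint_morphisms (a n) (a m)) ->
    forall (S : C) (inj : forall n, Hom (An n) S), is_coproduct An inj ->
    forall u : Hom S A, (forall n, u ∘ inj n = a n) ->
      is_coproduct_injection u.

Definition hyper_extensive : Prop :=
  has_countable_coproducts /\ coproducts_universal /\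
  coproducts_disjoint /\ coproducts_coherent.

Variable H : Functor C.

Definition preserves_countable_coproducts : Prop :=
  forall (I : Type), countable I -> forall (A : I -> C) (S : C)
    (inj : forall i, Hom (A i) S), is_coproduct A inj ->
    is_coproduct (fun i => H (A i)) (fun i => Fmap H (inj i)).

Definition is_terminal_coalgebra (T : C) (t : Hom T (H T)) : Prop :=
  forall (X : C) (e : Hom X (H X)),
    exists h : Hom X T, t ∘ h = Fmap H h ∘ e /\
      (forall h' : Hom X T, t ∘ h' = Fmap H h' ∘ e -> h' = h).

Fixpoint Hiter (n : nat) (Y : C) : C :=
  match n with O => Y | S k => H (Hiter k Y) end.

(* s solves e : X -> P (P = HX + A with injections p1, p2), i.e.
   s = [a, id] . (Hs + id) . e ; the copairing [a . Hs, id] is the u below *)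
Definition cia_solution (A : C) (a : Hom (H A) A) (X P : C)
  (p1 : Hom (H X) P) (p2 : Hom A P) (e : Hom X P) (s : Hom X A) : Prop :=
  forall u : Hom P A, u ∘ p1 = a ∘ Fmap H s -> u ∘ p2 = idm A -> s = u ∘ e.

Definition is_cia (A : C) (a : Hom (H A) A) : Prop :=
  forall (X P : C) (p1 : Hom (H X) P) (p2 : Hom A P), is_coproduct2 p1 p2 ->
  forall e : Hom X P,
    exists s : Hom X A, cia_solution a p1 p2 e s /\
      (forall s' : Hom X A, cia_solution a p1 p2 e s' -> s' = s).

Definition is_alg_morphism (A B : C) (a : Hom (H A) A) (b : Hom (H B) B)
  (h : Hom A B) : Prop := h ∘ a = b ∘ Fmap H h.

Definition is_free_cia (Y A : C) (a : Hom (H A) A) (eta : Hom Y A) : Prop :=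
  is_cia a /\
  forall (B : C) (b : Hom (H B) B), is_cia b -> forall f : Hom Y B,
    exists h : Hom A B, (is_alg_morphism a b h /\ h ∘ eta = f) /\
      (forall h' : Hom A B, is_alg_morphism a b h' /\ h' ∘ eta = f -> h' = h).

(* h : X -> T is a coalgebra morphism for Y + H(-) from (X, e : X -> Q)
   to (T, tau : T -> D), where Q = Y + HX (q1, q2) and D = Y + HT (i1, i2):
   tau . h = (id_Y + Hh) . e ; the map id_Y + Hh is w below *)
Definition YH_coalg_morphism (Y T D : C) (i1 : Hom Y D) (i2 : Hom (H T) D)
  (tau : Hom T D) (X Q : C) (q1 : Hom Y Q) (q2 : Hom (H X) Q) (e : Hom X Q)
  (h : Hom X T) : Prop :=
  forall w : Hom Q D, w ∘ q1 = i1 -> w ∘ q2 = i2 ∘ Fmap H h -> tau ∘ h = w ∘ e.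

Definition is_terminal_YH_coalgebra (Y T D : C) (i1 : Hom Y D)
  (i2 : Hom (H T) D) (tau : Hom T D) : Prop :=
  forall (X Q : C) (q1 : Hom Y Q) (q2 : Hom (H X) Q), is_coproduct2 q1 q2 ->
  forall e : Hom X Q,
    exists h : Hom X T, YH_coalg_morphism i1 i2 tau q1 q2 e h /\
      (forall h' : Hom X T, YH_coalg_morphism i1 i2 tau q1 q2 e h' -> h' = h).

End Cat.
Arguments is_coproduct [C I] A [S] inj.
Arguments is_terminal_coalgebra [C] H [T] t.
Arguments Hiter [C] H n Y.
Arguments is_cia [C] H [A] a.
Arguments is_free_cia [C] H [Y A] a eta.
Arguments is_terminal_YH_coalgebra [C] H [Y T D] i1 i2 tau.

(* Main.v *)
Require Import Defs.
From Stdlib Require Import ClassicalEpsilon ProofIrrelevance Arith Eqdep_dec.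
Set Implicit Arguments.
Unset Strict Implicit.

Section Gen.
Variable C : Category.

Definition disj {A B S : C} (a : Hom A S) (b : Hom B S) : Prop :=
  forall Q (p : Hom Q A) (q : Hom Q B), a ∘ p = b ∘ q -> is_initial Q.

Lemma init_uniq (Q X : C) : is_initial Q -> forall f g : Hom Q X, f = g.
Proof. intros HQ f g. destruct (HQ X) as [h Hh]. rewrite (Hh f), (Hh g). reflexivity. Qed.

Lemma cop2_ext (A B S X : C) (l : Hom A S) (r : Hom B S) : is_coproduct2 l r ->
  forall f g : Hom S X, f ∘ l = g ∘ l -> f ∘ r = g ∘ r -> f = g.
Proof.
  intros Hc f g H1 H2. destruct (Hc X (g ∘ l) (g ∘ r)) as [h [_ [_ U]]].
  rewrite (U f H1 H2), (U g eq_refl eq_refl). reflexivity.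
Qed.

Lemma cop_ext (I : Type) (A : I -> C) (S X : C) (inj : forall i, Hom (A i) S) :
  is_coproduct A inj -> forall f g : Hom S X, (forall i, f ∘ inj i = g ∘ inj i) -> f = g.
Proof.
  intros Hc f g E. destruct (Hc X (fun i => g ∘ inj i)) as [h [_ U]].
  rewrite (U f E), (U g (fun i => eq_refl)). reflexivity.
Qed.

Lemma cop2_map (A B S X : C) (l : Hom A S) (r : Hom B S) : is_coproduct2 l r ->
  forall (f : Hom A X) (g : Hom B X), { h : Hom S X | h ∘ l = f /\ h ∘ r = g }.
Proof.
  intros Hc f g. apply constructive_indefinite_description.
  destruct (Hc X f g) as [h [H1 [H2 _]]]. exists h; auto.
Qed.

Lemma cop_map (I : Type) (A : I -> C) (S X : C) (inj : forall i, Hom (A i) S) :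
  is_coproduct A inj -> forall f : forall i, Hom (A i) X, { h : Hom S X | forall i, h ∘ inj i = f i }.
Proof.
  intros Hc f. apply constructive_indefinite_description.
  destruct (Hc X f) as [h [H1 _]]. exists h; auto.
Qed.

Definition fam2 (A B : C) : bool -> C := fun b => if b then A else B.
Definition inj2 {A B S : C} (l : Hom A S) (r : Hom B S) : forall b, Hom (fam2 A B b) S :=
  fun b => if b as b0 return Hom (fam2 A B b0) S then l else r.

Lemma cop2_to_cop (A B S : C) (l : Hom A S) (r : Hom B S) :
  is_coproduct2 l r -> is_coproduct (fam2 A B) (inj2 l r).
Proof.
  intros Hc X f. destruct (Hc X (f true) (f false)) as [h [H1 [H2 U]]].
  exists h. split.
  - intros []; assumption.
  - intros h' E. apply U; [apply (E true) | apply (E false)].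
Qed.

Lemma cop_to_cop2 (F : bool -> C) (S : C) (i : forall b, Hom (F b) S) :
  is_coproduct F i -> is_coproduct2 (i true) (i false).
Proof.
  intros Hc X f g.
  destruct (Hc X (fun b => if b as b0 return Hom (F b0) X then f else g)) as [h [H1 U]].
  exists h. split; [apply (H1 true) | split; [apply (H1 false) |]].
  intros h' E1 E2. apply U. intros []; assumption.
Qed.

Lemma bool_countable : countable bool.
Proof. exists (fun b : bool => if b then 0 else 1). intros [] []; simpl; congruence. Qed.

Lemma empty_countable : countable Empty_set.
Proof. exists (fun e : Empty_set => match e with end). intros []. Qed.

Lemma nat_countable : countable nat.
Proof. exists (fun n => n). auto. Qed.

Definition efam : Empty_set -> C := fun e => match e with end.

Lemma cop_empty_initial (A : Empty_set -> C) (S : C) (inj : forall i, Hom (A i) S) :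
  is_coproduct A inj -> is_initial S.
Proof.
  intros Hc X. destruct (Hc X (fun e => match e with end)) as [h [_ U]].
  exists h. intros g. apply U. intros [].
Qed.

Lemma initial_cop_empty (S : C) : is_initial S ->
  is_coproduct efam (fun e => match e as e0 return Hom (efam e0) S with end).
Proof.
  intros HS X f. destruct (HS X) as [h Hh]. exists h. split; [intros [] | intros h' _; apply Hh].
Qed.

Lemma cop_initials (I : Type) (A : I -> C) (S : C) (inj : forall i, Hom (A i) S) :
  is_coproduct A inj -> (forall i, is_initial (A i)) -> is_initial S.
Proof.
  intros Hc Hi X.
  destruct (Hc X (fun i => proj1_sig (constructive_indefinite_description _ (Hi i X)))) as [h [H1 U]].
  exists h. intros g. apply U. intros i. apply init_uniq; auto.
Qed.

Lemma comp_into_initial_dummy : True. Proof. exact I. Qed.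

Section Ext.
Hypothesis hext : hyper_extensive C.

Lemma strict_initial (Z B : C) (f : Hom B Z) : is_initial Z -> is_initial B.
Proof.
  intros HZ. destruct hext as [_ [hu _]].
  pose proof (initial_cop_empty HZ) as Hc.
  destruct (hu Empty_set empty_countable _ _ _ Hc B f) as [_ H2].
  specialize (H2 efam (fun e => match e with end) (fun e => match e with end) (fun e => match e with end)).
  exact (cop_empty_initial H2).
Qed.

Lemma bin_cop_exists (A B : C) : exists S (l : Hom A S) (r : Hom B S), is_coproduct2 l r.
Proof.
  destruct hext as [hc _]. destruct (hc bool bool_countable (fam2 A B)) as [S [inj Hc]].
  exists S, (inj true), (inj false). exact (cop_to_cop2 Hc).
Qed.

Lemma bin_pullback (A B S Z : C) (a : Hom A S) (b : Hom B S) (f : Hom Z S) :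
  is_coproduct2 a b ->
  exists (P1 : C) (p1 : Hom P1 Z) (f1 : Hom P1 A) (P2 : C) (p2 : Hom P2 Z) (f2 : Hom P2 B),
    is_pullback a f f1 p1 /\ is_pullback b f f2 p2 /\ is_coproduct2 p1 p2.
Proof.
  intros Hc. destruct hext as [_ [hu _]].
  destruct (hu bool bool_countable _ _ _ (cop2_to_cop Hc) Z f) as [Ex Co].
  destruct (Ex true) as [P1 [f1 [p1 Pb1]]]. destruct (Ex false) as [P2 [f2 [p2 Pb2]]].
  exists P1, p1, f1, P2, p2, f2. split; [exact Pb1 | split; [exact Pb2|]].
  specialize (Co (fam2 P1 P2) (inj2 p1 p2) (fun bb => if bb as b0 return Hom (fam2 P1 P2 b0) (fam2 A B b0) then f1 else f2)).
  apply (cop_to_cop2 (F := fam2 P1 P2) (i := inj2 p1 p2)). apply Co. intros []; assumption.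
Qed.

Lemma cop2_disj (A B S : C) (a : Hom A S) (b : Hom B S) : is_coproduct2 a b -> disj a b.
Proof.
  intros Hc Q p q E. destruct hext as [_ [_ [hd _]]].
  destruct (hd bool bool_countable _ _ _ (cop2_to_cop Hc)) as [_ D].
  destruct (D true false ltac:(discriminate)) as [P [p0 [q0 [HP [_ U]]]]].
  destruct (U Q p q E) as [v _]. exact (strict_initial v HP).
Qed.

Lemma cop2_mono_l (A B S : C) (a : Hom A S) (b : Hom B S) : is_coproduct2 a b -> is_mono a.
Proof.
  intros Hc. destruct hext as [_ [_ [hd _]]].
  destruct (hd bool bool_countable _ _ _ (cop2_to_cop Hc)) as [M _]. exact (M true).
Qed.

Lemma cop2_mono_r (A B S : C) (a : Hom A S) (b : Hom B S) : is_coproduct2 a b -> is_mono b.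
Proof.
  intros Hc. destruct hext as [_ [_ [hd _]]].
  destruct (hd bool bool_countable _ _ _ (cop2_to_cop Hc)) as [M _]. exact (M false).
Qed.

Lemma cop2_sym (A B S : C) (a : Hom A S) (b : Hom B S) : is_coproduct2 a b -> is_coproduct2 b a.
Proof.
  intros Hc X f g. destruct (Hc X g f) as [h [H1 [H2 U]]]. exists h. split; [exact H2|split; [exact H1|]]. intros h' E1 E2. apply U; auto.
Qed.

Lemma fam_pullback (I : Type) (Ic : countable I) (A : I -> C) (S Z : C)
  (inj : forall i, Hom (A i) S) (f : Hom Z S) : is_coproduct A inj ->
  exists (P : I -> C) (p : forall i, Hom (P i) Z) (q : forall i, Hom (P i) (A i)),
    (forall i, inj i ∘ q i = f ∘ p i) /\ is_coproduct P p.
Proof.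
  intros Hc. destruct hext as [_ [hu _]].
  destruct (hu I Ic _ _ _ Hc Z f) as [Ex Co].
  assert (X : forall i, {P : C & {q : Hom P (A i) & {p : Hom P Z | is_pullback (inj i) f q p}}}).
  { intros i. destruct (constructive_indefinite_description _ (Ex i)) as [P HP].
    destruct (constructive_indefinite_description _ HP) as [q Hq].
    destruct (constructive_indefinite_description _ Hq) as [p Hp].
    exact (existT _ P (existT _ q (exist _ p Hp))). }
  exists (fun i => projT1 (X i)), (fun i => proj1_sig (projT2 (projT2 (X i)))),
    (fun i => projT1 (projT2 (X i))).
  split.
  - intros i. exact (proj1 (proj2_sig (projT2 (projT2 (X i))))).
  - apply (Co _ _ (fun i => projT1 (projT2 (X i)))). intros i. exact (proj2_sig (projT2 (projT2 (X i)))).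
Qed.

Lemma factor (A B S Z : C) (a : Hom A S) (b : Hom B S) (f : Hom Z S) :
  is_coproduct2 a b -> disj f a -> exists f' : Hom Z B, f = b ∘ f'.
Proof.
  intros Hc Hd. destruct (bin_pullback f Hc) as [P1 [p1 [f1 [P2 [p2 [f2 [[E1 _] [[E2 _] Hp]]]]]]]].
  assert (I1 : is_initial P1) by (apply (Hd P1 p1 f1); symmetry; exact E1).
  destruct (I1 B) as [z _].
  destruct (cop2_map Hp z f2) as [f' [F1 F2]].
  exists f'. apply (cop2_ext Hp).
  - apply init_uniq; exact I1.
  - rewrite <- comp_assoc, F2. symmetry; exact E2.
Qed.

Lemma coproduct_iso_r (A B S : C) (a : Hom A S) (b : Hom B S) : is_coproduct2 a b ->
  is_initial A -> exists b' : Hom S B, b' ∘ b = idm B /\ b ∘ b' = idm S.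
Proof.
  intros Hc HA. destruct (HA B) as [z _]. destruct (cop2_map Hc z (idm B)) as [b' [F1 F2]].
  exists b'. split; [exact F2|]. apply (cop2_ext Hc).
  - apply init_uniq; exact HA.
  - rewrite <- comp_assoc, F2, comp_id_l, comp_id_r. reflexivity.
Qed.

Lemma inj_comp (A1 A S : C) (a : Hom A1 A) (l : Hom A S) :
  is_coproduct_injection a -> is_coproduct_injection l -> is_coproduct_injection (l ∘ a).
Proof.
  intros [A2 [a2 Ha]] [B [r Hl]].
  destruct (bin_cop_exists A2 B) as [K [k1 [k2 Hk]]].
  destruct (cop2_map Hk (l ∘ a2) r) as [m [M1 M2]].
  exists K, m. intros X f g.
  destruct (cop2_map Hk (g ∘ k1) (g ∘ k2)) as [_ _].
  destruct (cop2_map Ha f (g ∘ k1)) as [u [U1 U2]].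
  destruct (cop2_map Hl u (g ∘ k2)) as [h [H1 H2]].
  exists h. split; [|split].
  - rewrite comp_assoc, H1. exact U1.
  - apply (cop2_ext Hk).
    + rewrite <- comp_assoc, M1, comp_assoc, H1. exact U2.
    + rewrite <- comp_assoc, M2. exact H2.
  - intros h' E1 E2. apply (cop2_ext Hl).
    + rewrite H1. apply (cop2_ext Ha).
      * rewrite <- comp_assoc. rewrite E1. symmetry; exact U1.
      * rewrite <- comp_assoc, U2, <- E2, <- comp_assoc, M1. reflexivity.
    + rewrite H2, <- E2, <- comp_assoc, M2. reflexivity.
Qed.

Lemma pb_inj (A S Z : C) (a : Hom A S) (f : Hom Z S) : is_coproduct_injection a ->
  exists (P : C) (p : Hom P Z) (q : Hom P A), is_pullback a f q p /\ is_coproduct_injection p.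
Proof.
  intros [B [b Hc]]. destruct (bin_pullback f Hc) as [P1 [p1 [f1 [P2 [p2 [f2 [Pb1 [_ Hp]]]]]]]].
  exists P1, p1, f1. split; [exact Pb1|]. exists P2, p2. exact Hp.
Qed.

End Ext.
End Gen.
Set Implicit Arguments.
Unset Strict Implicit.

Section Fun.
Variable C : Category.
Hypothesis hext : hyper_extensive C.

Lemma cop_nat_inj (A : nat -> C) (S : C) (inj : forall i, Hom (A i) S) :
  is_coproduct A inj -> forall n, is_coproduct_injection (inj n).
Proof.
  intros Hc n. destruct hext as [hc _].
  set (K := {m : nat | m <> n}).
  assert (Kc : countable K).
  { exists (fun x : K => proj1_sig x). intros [x hx] [y hy] E; simpl in E; subst.
    f_equal; apply proof_irrelevance. }
  destruct (hc K Kc (fun m => A (proj1_sig m))) as [T [kap Hk]].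
  destruct (cop_map Hk (fun m => inj (proj1_sig m))) as [b Hb].
  exists T, b. intros X f g.
  set (fam := fun m => match Nat.eq_dec m n with
                       | left E => eq_rect_r (fun k => Hom (A k) X) f E
                       | right N => g ∘ kap (exist _ m N) end).
  destruct (Hc X fam) as [h [H1 U]].
  assert (Hn : h ∘ inj n = f).
  { rewrite H1. unfold fam. destruct (Nat.eq_dec n n) as [E|N].
    - rewrite (UIP_refl_nat n E). reflexivity.
    - exfalso; auto. }
  assert (Hg : h ∘ b = g).
  { apply (cop_ext Hk). intros [m N]. rewrite <- comp_assoc, Hb. simpl. rewrite H1.
    unfold fam. destruct (Nat.eq_dec m n) as [E|N'].
    - exfalso; auto.
    - rewrite (proof_irrelevance _ N' N). reflexivity. }
  exists h. split; [exact Hn | split; [exact Hg|]].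
  intros h' E1 E2. apply U. intros m. unfold fam. destruct (Nat.eq_dec m n) as [E|N].
  - subst m. unfold eq_rect_r. simpl. exact E1.
  - rewrite <- E2, <- comp_assoc, Hb. reflexivity.
Qed.

Variable H : Functor C.
Hypothesis hpres : preserves_countable_coproducts H.

Lemma H_cop2 (A B S : C) (a : Hom A S) (b : Hom B S) :
  is_coproduct2 a b -> is_coproduct2 (Fmap H a) (Fmap H b).
Proof.
  intros Hc. pose proof (hpres bool_countable (cop2_to_cop Hc)) as X.
  exact (cop_to_cop2 X).
Qed.

Lemma H_inj (A S : C) (a : Hom A S) : is_coproduct_injection a -> is_coproduct_injection (Fmap H a).
Proof. intros [B [b Hc]]. exists (H B), (Fmap H b). apply H_cop2; exact Hc. Qed.

Lemma H_initial (Z : C) : is_initial Z -> is_initial (H Z).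
Proof.
  intros HZ. pose proof (hpres empty_countable (initial_cop_empty HZ)) as X.
  exact (cop_empty_initial X).
Qed.

Lemma H_disj (A S Z : C) (a : Hom A S) (f : Hom Z S) :
  is_coproduct_injection a -> disj f a -> disj (Fmap H f) (Fmap H a).
Proof.
  intros [B [b Hc]] Hd Q p q E.
  destruct (factor hext Hc Hd) as [f' Ef]. subst f.
  rewrite Fmap_comp, <- comp_assoc in E.
  apply (cop2_disj hext (H_cop2 Hc) (p := q) (q := Fmap H f' ∘ p)). symmetry; exact E.
Qed.

End Fun.
Set Implicit Arguments.
Unset Strict Implicit.

Lemma rw_l (C : Category) (A B D Z : C) (a : Hom B D) (b : Hom A B) (c : Hom A D) :
  a ∘ b = c -> forall (x : Hom D Z), x ∘ a ∘ b = x ∘ c.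
Proof. intros E x. rewrite <- comp_assoc, E. reflexivity. Qed.

Ltac crw E := rewrite ?comp_assoc; first [rewrite E | rewrite (rw_l E)].
Ltac crwb E := rewrite ?comp_assoc; first [rewrite <- E | rewrite <- (rw_l E)].
Ltac norm := repeat rewrite Fmap_comp; repeat rewrite comp_assoc.

Section Main.
Context (C : Category) (H : Functor C)
  (hext : hyper_extensive C)
  (hpres : preserves_countable_coproducts H)
  (nuH : C) (t : Hom nuH (H nuH)) (ht : is_terminal_coalgebra H t)
  (Y : C)
  (HsY : C) (j : forall n, Hom (Hiter H n Y) HsY)
  (hHsY : is_coproduct (fun n => Hiter H n Y) j)
  (phi : Hom (H HsY) HsY)
  (hphi : forall n, phi ∘ Fmap H (j n) = j (S n))
  (CY : C) (inl : Hom HsY CY) (inr : Hom nuH CY) (hCY : is_coproduct2 inl inr)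
  (tinv : Hom (H nuH) nuH)
  (htinv : tinv ∘ t = idm nuH /\ t ∘ tinv = idm (H nuH))
  (alg : Hom (H CY) CY)
  (halg1 : alg ∘ Fmap H inl = inl ∘ phi)
  (halg2 : alg ∘ Fmap H inr = inr ∘ tinv)
  (E : C) (e1 : Hom Y E) (e2 : Hom (H HsY) E) (hE : is_coproduct2 e1 e2)
  (k : Hom E HsY) (hk1 : k ∘ e1 = j O) (hk2 : k ∘ e2 = phi)
  (D : C) (i1 : Hom Y D) (i2 : Hom (H CY) D) (hD : is_coproduct2 i1 i2)
  (m : Hom E D) (hm1 : m ∘ e1 = i1) (hm2 : m ∘ e2 = i2 ∘ Fmap H inl).

Lemma HHsY_cop : is_coproduct (fun n => H (Hiter H n Y)) (fun n => Fmap H (j n)).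
Proof. exact (hpres nat_countable hHsY). Qed.

Lemma k_iso : is_iso k.
Proof.
  set (eps := fun n => match n as n0 return Hom (Hiter H n0 Y) E with
                       | O => e1 | S n' => e2 ∘ Fmap H (j n') end).
  destruct (cop_map hHsY eps) as [sg Hsg].
  assert (Hsg' : forall n, sg ∘ j n = eps n) by exact Hsg.
  exists sg. split.
  - apply (cop2_ext hE).
    + rewrite <- comp_assoc, hk1, comp_id_l. exact (Hsg' 0).
    + rewrite <- comp_assoc, hk2, comp_id_l. apply (cop_ext HHsY_cop). intros n.
      rewrite <- comp_assoc, hphi. exact (Hsg' (S n)).
  - apply (cop_ext hHsY). intros [|n]; rewrite <- comp_assoc, Hsg', comp_id_l; simpl.
    + exact hk1.
    + rewrite comp_assoc, hk2, hphi. reflexivity.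
Qed.

Section WithSigma.
Context (sigma : Hom HsY E) (hs1 : sigma ∘ k = idm E) (hs2 : k ∘ sigma = idm HsY)
  (c : Hom CY D) (hc1 : c ∘ inl = m ∘ sigma) (hc2 : c ∘ inr = i2 ∘ Fmap H inr ∘ t).

Lemma sig_j0 : sigma ∘ (j 0 : Hom Y HsY) = e1.
Proof. rewrite <- hk1, comp_assoc, hs1, comp_id_l. reflexivity. Qed.

Lemma sig_jS n : sigma ∘ (j (S n) : Hom (H (Hiter H n Y)) HsY) = e2 ∘ Fmap H (j n).
Proof. rewrite <- hphi, <- hk2, !comp_assoc, hs1, comp_id_l. reflexivity. Qed.

Lemma c_j0 : c ∘ inl ∘ (j 0 : Hom Y HsY) = i1.
Proof. cbn [Hiter]. rewrite hc1, <- comp_assoc, sig_j0, hm1. reflexivity. Qed.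

Lemma c_jS n : c ∘ inl ∘ (j (S n) : Hom (H (Hiter H n Y)) HsY) = i2 ∘ Fmap H (inl ∘ j n).
Proof. rewrite hc1, <- comp_assoc, sig_jS, comp_assoc, hm2. norm. reflexivity. Qed.

Lemma c_alg : c ∘ alg = i2.
Proof.
  apply (cop2_ext (H_cop2 hpres hCY)).
  - rewrite <- comp_assoc, halg1, comp_assoc, hc1.
    rewrite <- hk2, <- comp_assoc, (comp_assoc sigma k), hs1, comp_id_l. exact hm2.
  - rewrite <- comp_assoc, halg2, comp_assoc, hc2.
    rewrite <- comp_assoc, (proj2 htinv), comp_id_r. reflexivity.
Qed.

Definition dd : Hom D CY := proj1_sig (cop2_map hD (inl ∘ j 0) alg).
Lemma dd1 : dd ∘ i1 = inl ∘ j 0. Proof. exact (proj1 (proj2_sig (cop2_map hD (inl ∘ j 0) alg))). Qed.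
Lemma dd2 : dd ∘ i2 = alg. Proof. exact (proj2 (proj2_sig (cop2_map hD (inl ∘ j 0) alg))). Qed.

Lemma dd_c : dd ∘ c = idm CY.
Proof.
  apply (cop2_ext hCY).
  - rewrite <- comp_assoc, hc1, comp_id_l.
    assert (Hdm : dd ∘ m = inl ∘ k).
    { apply (cop2_ext hE).
      - rewrite <- comp_assoc, hm1, dd1, <- comp_assoc, hk1. reflexivity.
      - rewrite <- comp_assoc, hm2, comp_assoc, dd2, halg1, <- comp_assoc, hk2. reflexivity. }
    rewrite comp_assoc, Hdm, <- comp_assoc, hs2, comp_id_r. reflexivity.
  - rewrite <- comp_assoc, hc2, comp_id_l, !comp_assoc, dd2, halg2, <- comp_assoc, (proj1 htinv), comp_id_r.
    reflexivity.
Qed.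

Lemma c_dd : c ∘ dd = idm D.
Proof.
  apply (cop2_ext hD).
  - rewrite <- comp_assoc, dd1, comp_id_l, comp_assoc. exact c_j0.
  - rewrite <- comp_assoc, dd2, comp_id_l. exact c_alg.
Qed.

Lemma c_cancel (Z : C) (f g : Hom Z CY) : c ∘ f = c ∘ g -> f = g.
Proof.
  intros Ec. rewrite <- (comp_id_l f), <- (comp_id_l g), <- dd_c, <- !comp_assoc, Ec. reflexivity.
Qed.

Section Term.
Context (X Q : C) (q1 : Hom Y Q) (q2 : Hom (H X) Q) (hQ : is_coproduct2 q1 q2) (e : Hom X Q).

Record stage := mkStage { sA : C; sx : Hom sA X; sinj : is_coproduct_injection sx }.

Lemma pbT (A S Z : C) (a : Hom A S) (ha : is_coproduct_injection a) (f : Hom Z S) :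
  {P : C & {p : Hom P Z & {q : Hom P A | is_pullback a f q p /\ is_coproduct_injection p}}}.
Proof.
  destruct (constructive_indefinite_description _ (pb_inj hext f ha)) as [P HP].
  destruct (constructive_indefinite_description _ HP) as [p Hp].
  destruct (constructive_indefinite_description _ Hp) as [q Hq].
  exact (existT _ P (existT _ p (exist _ q Hq))).
Qed.

Lemma hq1 : is_coproduct_injection q1.
Proof. exists (H X), q2. exact hQ. Qed.
Lemma hq2 : is_coproduct_injection q2.
Proof. exists Y, q1. exact (cop2_sym hQ). Qed.

Definition inj_next (s : stage) : is_coproduct_injection (q2 ∘ Fmap H (sx s)) :=
  inj_comp hext (H_inj hpres (sinj s)) hq2.

Definition st0 := pbT hq1 e.
Definition stS (s : stage) := pbT (inj_next s) e.

Fixpoint stage_n (n : nat) : stage :=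
  match n with
  | O => mkStage (proj2 (proj2_sig (projT2 (projT2 st0))))
  | S n' => mkStage (proj2 (proj2_sig (projT2 (projT2 (stS (stage_n n'))))))
  end.

Definition Xn n := sA (stage_n n).
Definition xn n : Hom (Xn n) X := sx (stage_n n).
Definition y0 : Hom (Xn 0) Y := proj1_sig (projT2 (projT2 st0)).
Definition gn n : Hom (Xn (S n)) (H (Xn n)) := proj1_sig (projT2 (projT2 (stS (stage_n n)))).

Lemma pb0 : is_pullback q1 e y0 (xn 0).
Proof. exact (proj1 (proj2_sig (projT2 (projT2 st0)))). Qed.
Lemma pbS n : is_pullback (q2 ∘ Fmap H (xn n)) e (gn n) (xn (S n)).
Proof. exact (proj1 (proj2_sig (projT2 (projT2 (stS (stage_n n)))))). Qed.
Lemma xinj n : is_coproduct_injection (xn n).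
Proof. exact (sinj (stage_n n)). Qed.

Lemma eq0 : e ∘ xn 0 = q1 ∘ y0.
Proof. symmetry. exact (proj1 pb0). Qed.
Lemma eqS n : e ∘ xn (S n) = q2 ∘ Fmap H (xn n) ∘ gn n.
Proof. symmetry. exact (proj1 (pbS n)). Qed.

Lemma xdisj : forall n p, n <> p -> disj (xn n) (xn p).
Proof.
  induction n as [|n IH]; intros [|p] Hnp Z a b Eab.
  - congruence.
  - apply (cop2_disj hext hQ (p := y0 ∘ a) (q := Fmap H (xn p) ∘ gn p ∘ b)).
    rewrite !comp_assoc, <- eq0, <- (comp_assoc e), Eab, comp_assoc, eqS. reflexivity.
  - apply (cop2_disj hext hQ (p := y0 ∘ b) (q := Fmap H (xn n) ∘ gn n ∘ a)).
    rewrite !comp_assoc, <- eq0, <- (comp_assoc e), <- Eab, comp_assoc, eqS. reflexivity.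
  - assert (E2 : Fmap H (xn n) ∘ (gn n ∘ a) = Fmap H (xn p) ∘ (gn p ∘ b)).
    { apply (cop2_mono_r hext hQ). rewrite !comp_assoc, <- !eqS, <- !comp_assoc, Eab. reflexivity. }
    exact (H_disj hext hpres (xinj p) (IH p ltac:(congruence)) E2).
Qed.

Lemma xdisjm n p : n <> p -> disjoint_morphisms (xn n) (xn p).
Proof.
  intros Hnp. destruct (pb_inj hext (xn p) (xinj n)) as [P [pp [qq [Pb _]]]].
  exists P, qq, pp. split; [| exact Pb].
  exact (xdisj Hnp (proj1 Pb)).
Qed.

Lemma fin_cop : {S : C & {inj : forall n, Hom (Xn n) S | is_coproduct Xn inj}}.
Proof.
  destruct hext as [hc _].
  destruct (constructive_indefinite_description _ (hc nat nat_countable Xn)) as [S HS].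
  destruct (constructive_indefinite_description _ HS) as [inj Hi].
  exact (existT _ S (exist _ inj Hi)).
Qed.
Definition Sfin := projT1 fin_cop.
Definition injf : forall n, Hom (Xn n) Sfin := proj1_sig (projT2 fin_cop).
Lemma hSfin : is_coproduct Xn injf.
Proof. exact (proj2_sig (projT2 fin_cop)). Qed.

Definition uu : Hom Sfin X := proj1_sig (cop_map hSfin xn).
Lemma uu_inj n : uu ∘ injf n = xn n.
Proof. exact (proj2_sig (cop_map hSfin xn) n). Qed.

Lemma uu_is_inj : is_coproduct_injection uu.
Proof.
  destruct hext as [_ [_ [_ hco]]].
  exact (hco X Xn xn xinj (fun n p Hnp => xdisjm Hnp) Sfin injf hSfin uu uu_inj).
Qed.

Lemma inf_cop : {Xi : C & {xi : Hom Xi X | is_coproduct2 uu xi}}.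
Proof.
  destruct (constructive_indefinite_description _ uu_is_inj) as [S HS].
  destruct (constructive_indefinite_description _ HS) as [xi Hi].
  exact (existT _ S (exist _ xi Hi)).
Qed.
Definition Xinf := projT1 inf_cop.
Definition xinf : Hom Xinf X := proj1_sig (projT2 inf_cop).
Lemma hux : is_coproduct2 uu xinf.
Proof. exact (proj2_sig (projT2 inf_cop)). Qed.

Lemma ux_disj : disj uu xinf.
Proof. exact (cop2_disj hext hux). Qed.

Lemma ex_gamma : exists g : Hom Xinf (H X), e ∘ xinf = q2 ∘ g.
Proof.
  apply (factor hext hQ). intros Z p q Epq.
  destruct ((proj2 pb0) Z q (xinf ∘ p) ltac:(rewrite comp_assoc; symmetry; exact Epq)) as [w [W1 [W2 _]]].
  apply (ux_disj (p := injf 0 ∘ w) (q := p)). rewrite comp_assoc, uu_inj. exact W2.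
Qed.
Definition gam : Hom Xinf (H X) := proj1_sig (constructive_indefinite_description _ ex_gamma).
Lemma gam_eq : e ∘ xinf = q2 ∘ gam.
Proof. exact (proj2_sig (constructive_indefinite_description _ ex_gamma)). Qed.

Lemma HSfin : is_coproduct (fun n => H (Xn n)) (fun n => Fmap H (injf n)).
Proof. exact (hpres nat_countable hSfin). Qed.

Lemma ex_ginf : exists g : Hom Xinf (H Xinf), gam = Fmap H xinf ∘ g.
Proof.
  apply (factor hext (H_cop2 hpres hux)). intros Z p q Epq.
  destruct (fam_pullback hext nat_countable q HSfin) as [P [pp [qq [Eq Hc]]]].
  apply (cop_initials Hc). intros n.
  assert (Ey : (q2 ∘ Fmap H (xn n)) ∘ qq n = e ∘ (xinf ∘ p ∘ pp n)).
  { rewrite !comp_assoc, gam_eq, <- (comp_assoc _ gam p), Epq.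
    rewrite <- !comp_assoc, <- Eq, (comp_assoc (Fmap H uu) (Fmap H (injf n))), <- Fmap_comp, uu_inj. reflexivity. }
  destruct ((proj2 (pbS n)) (P n) (qq n) _ Ey) as [w [W1 [W2 _]]].
  apply (ux_disj (p := injf (S n) ∘ w) (q := p ∘ pp n)). rewrite comp_assoc, uu_inj, W2.
  symmetry; apply comp_assoc.
Qed.
Definition ginf : Hom Xinf (H Xinf) := proj1_sig (constructive_indefinite_description _ ex_ginf).
Lemma einf : e ∘ xinf = q2 ∘ Fmap H xinf ∘ ginf.
Proof.
  rewrite gam_eq, (proj2_sig (constructive_indefinite_description _ ex_ginf)). apply comp_assoc.
Qed.

Definition bb : Hom Xinf nuH := proj1_sig (constructive_indefinite_description _ (ht ginf)).
Lemma bb_eq : t ∘ bb = Fmap H bb ∘ ginf.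
Proof. exact (proj1 (proj2_sig (constructive_indefinite_description _ (ht ginf)))). Qed.
Lemma bb_uniq (b' : Hom Xinf nuH) : t ∘ b' = Fmap H b' ∘ ginf -> b' = bb.
Proof. exact (proj2 (proj2_sig (constructive_indefinite_description _ (ht ginf))) b'). Qed.

Fixpoint an n : Hom (Xn n) (Hiter H n Y) :=
  match n with O => y0 | S n' => Fmap H (an n') ∘ gn n' end.

Definition hf : Hom Sfin HsY := proj1_sig (cop_map hSfin (fun n => j n ∘ an n)).
Lemma hf_inj n : hf ∘ injf n = j n ∘ an n.
Proof. exact (proj2_sig (cop_map hSfin (fun n => j n ∘ an n)) n). Qed.

Definition hh : Hom X CY := proj1_sig (cop2_map hux (inl ∘ hf) (inr ∘ bb)).
Lemma hh_u : hh ∘ uu = inl ∘ hf.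
Proof. exact (proj1 (proj2_sig (cop2_map hux (inl ∘ hf) (inr ∘ bb)))). Qed.
Lemma hh_inf : hh ∘ xinf = inr ∘ bb.
Proof. exact (proj2 (proj2_sig (cop2_map hux (inl ∘ hf) (inr ∘ bb)))). Qed.
Lemma hh_x n : hh ∘ xn n = inl ∘ j n ∘ an n.
Proof. rewrite <- uu_inj, comp_assoc, hh_u, <- comp_assoc, hf_inj. apply comp_assoc. Qed.

Lemma hh_coalg : YH_coalg_morphism i1 i2 c q1 q2 e hh.
Proof.
  intros w W1 W2. apply (cop2_ext hux).
  - apply (cop_ext hSfin). intros n. rewrite <- !comp_assoc, !uu_inj, !comp_assoc.
    destruct n as [|n].
    + rewrite <- (comp_assoc c hh), hh_x, <- (comp_assoc w e), eq0, !comp_assoc, W1.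
      cbn [Hiter an]. rewrite c_j0. reflexivity.
    + rewrite <- (comp_assoc c hh), hh_x, <- (comp_assoc w e), eqS, !comp_assoc, W2.
      rewrite <- (comp_assoc i2 (Fmap H hh) (Fmap H (xn n))), <- Fmap_comp, hh_x.
      cbn [Hiter an]. rewrite c_jS. norm. reflexivity.
  - rewrite <- (comp_assoc c hh), hh_inf, comp_assoc, hc2, <- (comp_assoc _ t bb), bb_eq.
    rewrite <- (comp_assoc w e), einf, !comp_assoc, W2.
    rewrite <- (comp_assoc i2 (Fmap H hh) (Fmap H xinf)), <- Fmap_comp, hh_inf.
    norm. reflexivity.
Qed.

Lemma inl_j_inj n : is_coproduct_injection (inl ∘ j n).
Proof.
  apply (inj_comp hext (cop_nat_inj hext hHsY n)). exists nuH, inr. exact hCY.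
Qed.

Lemma hh_uniq (h' : Hom X CY) : YH_coalg_morphism i1 i2 c q1 q2 e h' -> h' = hh.
Proof.
  intros Hh'.
  destruct (cop2_map hQ i1 (i2 ∘ Fmap H h')) as [w' [W1 W2]].
  pose proof (Hh' w' W1 W2) as Ec.
  assert (Fin : forall n, h' ∘ xn n = inl ∘ j n ∘ an n).
  { induction n as [|n IH]; apply c_cancel.
    - rewrite !comp_assoc, Ec, <- (comp_assoc w' e), eq0, comp_assoc, W1.
      cbn [Hiter an]. rewrite c_j0. reflexivity.
    - rewrite !comp_assoc, Ec, <- (comp_assoc w' e), eqS, !comp_assoc, W2.
      rewrite <- (comp_assoc i2 (Fmap H h') (Fmap H (xn n))), <- Fmap_comp, IH.
      cbn [Hiter an]. rewrite c_jS. norm. reflexivity. }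
  assert (EU : c ∘ (h' ∘ xinf) = i2 ∘ Fmap H (h' ∘ xinf) ∘ ginf).
  { rewrite comp_assoc, Ec, <- (comp_assoc w' e), einf, !comp_assoc, W2.
    rewrite <- (comp_assoc i2 (Fmap H h') (Fmap H xinf)), <- Fmap_comp. reflexivity. }
  assert (Dn : forall n, disj (h' ∘ xinf) (inl ∘ j n)).
  { induction n as [|n IH]; intros Z p q Epq.
    - apply (cop2_disj hext hD (p := q) (q := Fmap H (h' ∘ xinf) ∘ ginf ∘ p)).
      transitivity (c ∘ (h' ∘ xinf ∘ p)).
      + rewrite Epq. cbn [Hiter]. rewrite !comp_assoc, c_j0. reflexivity.
      + rewrite (comp_assoc c (h' ∘ xinf) p), EU, !comp_assoc. reflexivity.
    - assert (E2 : Fmap H (h' ∘ xinf) ∘ (ginf ∘ p) = Fmap H (inl ∘ j n) ∘ q).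
      { apply (cop2_mono_r hext hD). rewrite !comp_assoc, <- EU, <- comp_assoc, Epq.
        cbn [Hiter]. rewrite !comp_assoc, c_jS. reflexivity. }
      exact (H_disj hext hpres (inl_j_inj n) IH E2). }
  assert (Dl : disj (h' ∘ xinf) inl).
  { intros Z p q Epq.
    destruct (fam_pullback hext nat_countable q hHsY) as [P [pp [qq [Eq Hc]]]].
    cbn beta in Eq.
    apply (cop_initials Hc). intros n.
    apply (Dn n _ (p ∘ pp n) (qq n)).
    rewrite comp_assoc, Epq, <- comp_assoc, <- Eq. apply comp_assoc. }
  destruct (factor hext hCY Dl) as [b' Eb'].
  assert (Hb' : t ∘ b' = Fmap H b' ∘ ginf).
  { apply (cop2_mono_r hext (H_cop2 hpres hCY)). apply (cop2_mono_r hext hD).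
    rewrite !comp_assoc, <- hc2, <- comp_assoc, <- Eb', EU, Eb'. norm. reflexivity. }
  apply bb_uniq in Hb'. subst b'.
  apply (cop2_ext hux).
  - apply (cop_ext hSfin). intros n. rewrite <- !comp_assoc, !uu_inj, Fin, hh_x. reflexivity.
  - rewrite Eb', hh_inf. reflexivity.
Qed.

End Term.

Lemma c_terminal : is_terminal_YH_coalgebra H i1 i2 c.
Proof.
  intros X Q q1 q2 hQ e. exists (hh hQ e). split.
  - apply hh_coalg.
  - intros h' Hh'. apply hh_uniq; exact Hh'.
Qed.

Lemma alg_cia : is_cia H alg.
Proof.
  intros X P p1 p2 hP e.
  destruct (bin_cop_exists hext X CY) as [K [kl [kr hK]]].
  destruct (bin_cop_exists hext Y (H K)) as [Q [q1 [q2 hQ]]].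
  destruct (cop2_map hD q1 (q2 ∘ Fmap H kr)) as [v [V1 V2]].
  destruct (cop2_map hP (q2 ∘ Fmap H kl) (v ∘ c)) as [z [Z1 Z2]].
  destruct (cop2_map hK (z ∘ e) (v ∘ c)) as [eps [P1 P2]].
  destruct (c_terminal hQ eps) as [h [Hh Hu]].
  destruct (cop2_map hQ i1 (i2 ∘ Fmap H h)) as [w [W1 W2]].
  pose proof (Hh w W1 W2) as Ew.
  assert (Hr : h ∘ kr = idm CY).
  { assert (U1 : YH_coalg_morphism i1 i2 c i1 i2 c (h ∘ kr)).
    { intros w1 X1 X2. 
      assert (w1 = w ∘ v).
      { apply (cop2_ext hD).
        - rewrite X1, <- comp_assoc, V1, W1. reflexivity.
        - rewrite X2, <- comp_assoc, V2, comp_assoc, W2. norm. reflexivity. }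
      subst w1. rewrite !comp_assoc, Ew, <- comp_assoc, P2, !comp_assoc. reflexivity. }
    assert (U2 : YH_coalg_morphism i1 i2 c i1 i2 c (idm CY)).
    { intros w1 X1 X2. rewrite comp_id_r, Fmap_id, comp_id_r in *.
      assert (w1 = idm D) as -> by (apply (cop2_ext hD); rewrite comp_id_l; assumption).
      rewrite comp_id_l. reflexivity. }
    destruct (c_terminal hD c) as [h0 [_ U0]].
    rewrite (U0 _ U1), (U0 _ U2). reflexivity. }
  assert (Wv : w ∘ v = idm D).
  { apply (cop2_ext hD).
    - rewrite <- comp_assoc, V1, W1, comp_id_l. reflexivity.
    - rewrite <- comp_assoc, V2, comp_assoc, W2, <- comp_assoc, <- Fmap_comp, Hr, Fmap_id, comp_id_r, comp_id_l.
      reflexivity. }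
  exists (h ∘ kl). split.
  - intros u U1 U2. apply c_cancel.
    rewrite comp_assoc, Ew, <- comp_assoc, P1, comp_assoc.
    assert (w ∘ z = c ∘ u) as ->; [|symmetry; apply comp_assoc].
    apply (cop2_ext hP).
    + rewrite <- !comp_assoc, Z1, U1, comp_assoc, W2, comp_assoc, c_alg. norm. reflexivity.
    + rewrite <- !comp_assoc, Z2, U2, comp_assoc, Wv, comp_id_l, comp_id_r. reflexivity.
  - intros s' Hs'.
    destruct (cop2_map hP (alg ∘ Fmap H s') (idm CY)) as [u' [U1 U2]].
    pose proof (Hs' u' U1 U2) as Es.
    destruct (cop2_map hK s' (idm CY)) as [h' [H1 H2]].
    assert (Hc : YH_coalg_morphism i1 i2 c q1 q2 eps h').
    { intros w1 X1 X2.
      assert (Wv1 : w1 ∘ v = idm D).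
      { apply (cop2_ext hD).
        - rewrite <- comp_assoc, V1, X1, comp_id_l. reflexivity.
        - rewrite <- comp_assoc, V2, comp_assoc, X2, <- comp_assoc, <- Fmap_comp, H2, Fmap_id, comp_id_r, comp_id_l.
          reflexivity. }
      apply (cop2_ext hK).
      - rewrite <- !comp_assoc, H1, P1, Es, !comp_assoc. f_equal.
        apply (cop2_ext hP).
        + rewrite <- !comp_assoc, U1, Z1, comp_assoc, c_alg, comp_assoc, X2, <- comp_assoc, <- Fmap_comp, H1. reflexivity.
        + rewrite <- !comp_assoc, U2, Z2, comp_assoc, Wv1, comp_id_l, comp_id_r. reflexivity.
      - rewrite <- !comp_assoc, H2, P2, comp_assoc, Wv1, comp_id_l, comp_id_r. reflexivity. }
    rewrite <- H1, (Hu h' Hc). reflexivity.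
Qed.

Lemma alg_free : is_free_cia H alg (inl ∘ j 0).
Proof.
  split; [exact alg_cia|].
  intros B b hb f.
  destruct (bin_cop_exists hext (H CY) B) as [P [p1 [p2 hP]]].
  destruct (cop2_map hD (p2 ∘ f) p1) as [v [V1 V2]].
  destruct (hb CY P p1 p2 hP (v ∘ c)) as [s [Hs Us]].
  destruct (cop2_map hP (b ∘ Fmap H s) (idm B)) as [u [U1 U2]].
  pose proof (Hs u U1 U2) as Es.
  assert (Hd : s ∘ dd = u ∘ v).
  { rewrite Es, <- !comp_assoc, c_dd, comp_id_r. reflexivity. }
  exists s. split; [split|].
  - unfold is_alg_morphism. rewrite <- dd2, comp_assoc, Hd, <- comp_assoc, V2, U1. reflexivity.
  - rewrite <- dd1, comp_assoc, Hd, <- comp_assoc, V1, comp_assoc, U2, comp_id_l. reflexivity.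
  - intros g [Hg1 Hg2]. apply Us. intros u' U1' U2'.
    rewrite <- (comp_id_r g), <- dd_c, comp_assoc, comp_assoc. f_equal.
    apply (cop2_ext hD).
    + rewrite <- comp_assoc, dd1. cbn [Hiter] in *. rewrite Hg2, <- comp_assoc, V1, comp_assoc, U2', comp_id_l. reflexivity.
    + rewrite <- comp_assoc, dd2, Hg1, <- comp_assoc, V2, U1'. reflexivity.
Qed.

End WithSigma.
End Main.

Theorem mainTheorem2 (C : Category) (H : Functor C)
  (hext : hyper_extensive C)
  (hpres : preserves_countable_coproducts H)
  (nuH : C) (t : Hom nuH (H nuH)) (ht : is_terminal_coalgebra H t)
  (Y : C)
  (HsY : C) (j : forall n, Hom (Hiter H n Y) HsY)
  (hHsY : is_coproduct (fun n => Hiter H n Y) j)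
  (phi : Hom (H HsY) HsY)
  (hphi : forall n, phi ∘ Fmap H (j n) = j (S n))
  (CY : C) (inl : Hom HsY CY) (inr : Hom nuH CY) (hCY : is_coproduct2 inl inr)
  (tinv : Hom (H nuH) nuH)
  (htinv : tinv ∘ t = idm nuH /\ t ∘ tinv = idm (H nuH))
  (alg : Hom (H CY) CY)
  (halg1 : alg ∘ Fmap H inl = inl ∘ phi)
  (halg2 : alg ∘ Fmap H inr = inr ∘ tinv)
  (E : C) (e1 : Hom Y E) (e2 : Hom (H HsY) E) (hE : is_coproduct2 e1 e2)
  (k : Hom E HsY) (hk1 : k ∘ e1 = j O) (hk2 : k ∘ e2 = phi)
  (D : C) (i1 : Hom Y D) (i2 : Hom (H CY) D) (hD : is_coproduct2 i1 i2)
  (m : Hom E D) (hm1 : m ∘ e1 = i1) (hm2 : m ∘ e2 = i2 ∘ Fmap H inl) :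
  is_free_cia H alg (inl ∘ j O) /\
  is_iso k /\
  (forall sigma : Hom HsY E, sigma ∘ k = idm E -> k ∘ sigma = idm HsY ->
   forall c : Hom CY D,
     c ∘ inl = m ∘ sigma -> c ∘ inr = i2 ∘ Fmap H inr ∘ t ->
     is_terminal_YH_coalgebra H i1 i2 c).
Proof.
  assert (Hk : is_iso k) by (eapply k_iso; eassumption).
  split; [|split; [exact Hk|]].
  - destruct Hk as [sigma [hs1 hs2]].
    destruct (cop2_map hCY (m ∘ sigma) (i2 ∘ Fmap H inr ∘ t)) as [c [hc1 hc2]].
    eapply alg_free; eassumption.
  - intros sigma hs1 hs2 c hc1 hc2. eapply c_terminal; eassumption.
Qed.
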